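(* Let $H$ be a quasi-bialgebra, $\mathcal{A}$ an $H$-bimodule algebra, $\mathbb{A}$ an $H$-bicomodule algebra and $F\in H\otimes H$ a gauge transformation. Then the L-R-smash product $\mathcal{A}\natural\mathbb{A}$ (over $H$) and the L-R-smash product ${}_F\mathcal{A}_{F^{-1}}\natural{}^F\mathbb{A}^{F^{-1}}$ (over $H_F$) have the same multiplication on $\mathcal{A}\otimes\mathbb{A}$; i.e. the identity map is an algebra isomorphism.
   Context: Work over a field $k$. $H$ is a quasi-bialgebra $(H,\Delta,\varepsilon,\Phi)$ (unital algebra, algebra maps $\Delta(h)=h_1\otimes h_2$, $\varepsilon$, invertible $\Phi$ with $(id\otimes\Delta)\Delta(h)=\Phi(\Delta\otimes id)\Delta(h)\Phi^{-1}$, counit axioms, pentagon 3-cocycle condition, $(id\otimes\varepsilon\otimes id)\Phi=1\otimes1\otimes1$). $H$-bimodule algebras and $H$-bicomodule algebras $(\mathbb{A},\lambda,\rho,\Phi_\lambda,\Phi_\rho,\Phi_{\lambda,\rho})$ are defined in the sense of Hausser–Nill (algebras in the monoidal category of $H$-bimodules with associator $\Phi\cdot(-)\cdot\Phi^{-1}$; resp. compatible left and right quasi-coactions $\lambda(u)=u_{[-1]}\otimes u_{[0]}$, $\rho(u)=u_{<0>}\otimes u_{<1>}$ with reassociators $\Phi_\lambda\in H\otimes H\otimes\mathbb{A}$, $\Phi_\rho\in\mathbb{A}\otimes H\otimes H$, $\Phi_{\lambda,\rho}\in H\otimes\mathbb{A}\otimes H$). A gauge transformation is an invertible $F=F^1\otimes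 F^2\in H\otimes H$ with $(\varepsilon\otimes id)F=(id\otimes\varepsilon)F=1$; write $F^{-1}=G^1\otimes G^2$. $H_F$ is the quasi-bialgebra with the same algebra and counit, $\Delta_F(h)=F\Delta(h)F^{-1}$, $\Phi_F=(1\otimes F)(id\otimes\Delta)(F)\Phi(\Delta\otimes id)(F^{-1})(F^{-1}\otimes1)$. ${}_F\mathcal{A}_{F^{-1}}$ is $\mathcal{A}$ with the same unit and actions and new product $\varphi\circ\varphi'=(G^1\cdot\varphi\cdot F^1)(G^2\cdot\varphi'\cdot F^2)$; it is an $H_F$-bimodule algebra. ${}^F\mathbb{A}^{F^{-1}}$ is the $H_F$-bicomodule algebra with the same algebra, $\lambda$, $\rho$ and $\Phi_{\lambda,\rho}$, and with reassociators $\Phi_\lambda(F^{-1}\otimes1_{\mathbb{A}})$ and $(1_{\mathbb{A}}\otimes F)\Phi_\rho$. The L-R-smash product over a quasi-bialgebra $H$: $\mathcal{A}\otimes\mathbb{A}$ with product $(\varphi\natural u)(\psi\natural u')=(\tilde{x}^1_{\lambda}\cdot\varphi\cdot\theta^3u'_{<1>}\tilde{x}^2_{\rho})(\tilde{x}^2_{\lambda}u_{[-1]}\theta^1\cdot\psi\cdot\tilde{x}^3_{\rho})\natural\tilde{x}^3_{\lambda}u_{[0]}\theta^2u'_{<0>}\tilde{x}^1_{\rho}$, where $\Phi_\rho^{-1}=\tilde{x}^1_\rho\otimes\tilde{x}^2_\rho\otimes\tilde{x}^3_\rho$, $\Phi_\lambda^{-1}=\tilde{x}^1_\lambda\otimes\tilde{x}^2_\lambda\otimes\tilde{x}^3_\lambda$,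 $\Phi_{\lambda,\rho}^{-1}=\theta^1\otimes\theta^2\otimes\theta^3$. *)

(* Defs.v *)
(* Tensor products over the field k are modelled by finite
   lists of simple tensors (representatives); equality in the tensor product
   is tested against linear functionals. *)
From HB Require Import structures.
From mathcomp Require Import all_boot all_order all_algebra.
Set Implicit Arguments. Unset Strict Implicit. Unset Printing Implicit Defensive.
Import GRing.Theory.
Local Open Scope ring_scope.

Section QuasiHopf.
Variable k : fieldType.

Definition islin (V : lmodType k) (f : V -> k) :=
  forall (a : k) (x y : V), f (a *: x + y) = a * f x + f y.

Definition bilinear_map (U V W : lmodType k) (m : U -> V -> W) :=
  (forall (a : k) x y z, m (a *: x + y) z = a *: m x z + m y z) /\
  (forall (a : k) x y z, m z (a *: x + y) = a *: m z x + m z y).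

Definition unital_bilinear (V : lmodType k) (m : V -> V -> V) (e : V) :=
  [/\ bilinear_map m, (forall x, m e x = x) & (forall x, m x e = x)].

Definition is_algebra (V : lmodType k) (m : V -> V -> V) (e : V) :=
  unital_bilinear m e /\ associative m.

Definition bind (X Y : Type) (s : seq X) (f : X -> seq Y) : seq Y :=
  flatten (map f s).

Definition teq2 (U V : lmodType k) (s t : seq (U * V)) :=
  forall (f : U -> k) (g : V -> k), islin f -> islin g ->
    \sum_(p <- s) (f p.1 * g p.2) = \sum_(p <- t) (f p.1 * g p.2).

Definition teq3 (U V W : lmodType k) (s t : seq (U * V * W)) :=
  forall (f : U -> k) (g : V -> k) (h : W -> k), islin f -> islin g -> islin h ->
    \sum_(p <- s) (f p.1.1 * g p.1.2 * h p.2) =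
    \sum_(p <- t) (f p.1.1 * g p.1.2 * h p.2).

Definition teq4 (U V W X : lmodType k) (s t : seq (U * V * W * X)) :=
  forall (f : U -> k) (g : V -> k) (h : W -> k) (l : X -> k),
    islin f -> islin g -> islin h -> islin l ->
    \sum_(p <- s) (f p.1.1.1 * g p.1.1.2 * h p.1.2 * l p.2) =
    \sum_(p <- t) (f p.1.1.1 * g p.1.1.2 * h p.1.2 * l p.2).

Definition sc2 (U V : lmodType k) (a : k) (s : seq (U * V)) :=
  [seq (a *: p.1, p.2) | p <- s].

Definition lin2 (X U V : lmodType k) (D : X -> seq (U * V)) :=
  forall (a : k) (x y : X), teq2 (D (a *: x + y)) (sc2 a (D x) ++ D y).

Definition mul2 (U V : Type) (mU : U -> U -> U) (mV : V -> V -> V)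
  (s t : seq (U * V)) : seq (U * V) :=
  [seq (mU p.1 q.1, mV p.2 q.2) | p <- s, q <- t].

Definition mul3 (U V W : Type) (mU : U -> U -> U) (mV : V -> V -> V)
  (mW : W -> W -> W) (s t : seq (U * V * W)) : seq (U * V * W) :=
  [seq (mU p.1.1 q.1.1, mV p.1.2 q.1.2, mW p.2 q.2) | p <- s, q <- t].

Definition mul4 (U V W X : Type) (mU : U -> U -> U) (mV : V -> V -> V)
  (mW : W -> W -> W) (mX : X -> X -> X) (s t : seq (U * V * W * X))
  : seq (U * V * W * X) :=
  [seq (mU p.1.1.1 q.1.1.1, mV p.1.1.2 q.1.1.2, mW p.1.2 q.1.2, mX p.2 q.2)
  | p <- s, q <- t].

Definition ap2_1 (X U V W : Type) (D : X -> seq (U * V)) (s : seq (X * W))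
  : seq (U * V * W) := bind s (fun p => [seq (q.1, q.2, p.2) | q <- D p.1]).
Definition ap2_2 (W X U V : Type) (D : X -> seq (U * V)) (s : seq (W * X))
  : seq (W * U * V) := bind s (fun p => [seq (p.1, q.1, q.2) | q <- D p.2]).
Definition ap3_1 (X U V W1 W2 : Type) (D : X -> seq (U * V))
  (s : seq (X * W1 * W2)) : seq (U * V * W1 * W2) :=
  bind s (fun p => [seq (q.1, q.2, p.1.2, p.2) | q <- D p.1.1]).
Definition ap3_2 (W1 X U V W2 : Type) (D : X -> seq (U * V))
  (s : seq (W1 * X * W2)) : seq (W1 * U * V * W2) :=
  bind s (fun p => [seq (p.1.1, q.1, q.2, p.2) | q <- D p.1.2]).
Definition ap3_3 (W1 W2 X U V : Type) (D : X -> seq (U * V))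
  (s : seq (W1 * W2 * X)) : seq (W1 * W2 * U * V) :=
  bind s (fun p => [seq (p.1.1, p.1.2, q.1, q.2) | q <- D p.2]).

Definition lift2_l (E U V : Type) (e : E) (s : seq (U * V)) : seq (E * U * V) :=
  [seq (e, p.1, p.2) | p <- s].
Definition lift2_r (E U V : Type) (e : E) (s : seq (U * V)) : seq (U * V * E) :=
  [seq (p.1, p.2, e) | p <- s].
Definition lift3_l (E U V W : Type) (e : E) (s : seq (U * V * W))
  : seq (E * U * V * W) := [seq (e, p.1.1, p.1.2, p.2) | p <- s].
Definition lift3_r (E U V W : Type) (e : E) (s : seq (U * V * W))
  : seq (U * V * W * E) := [seq (p.1.1, p.1.2, p.2, e) | p <- s].

Record quasi_bialgebra (H : lmodType k) (mH : H -> H -> H) (eH : H)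
  (D : H -> seq (H * H)) (eps : H -> k) (Phi Phii : seq (H * H * H)) : Prop := {
  qb_alg : is_algebra mH eH;
  qb_D_lin : lin2 D;
  qb_D_mul : forall x y, teq2 (D (mH x y)) (mul2 mH mH (D x) (D y));
  qb_D_one : teq2 (D eH) [:: (eH, eH)];
  qb_eps_lin : islin eps;
  qb_eps_mul : forall x y, eps (mH x y) = eps x * eps y;
  qb_eps_one : eps eH = 1;
  qb_Phi_inv_r : teq3 (mul3 mH mH mH Phi Phii) [:: (eH, eH, eH)];
  qb_Phi_inv_l : teq3 (mul3 mH mH mH Phii Phi) [:: (eH, eH, eH)];
  (* (id (x) Delta) Delta(h) = Phi (Delta (x) id) Delta(h) Phi^-1 *)
  qb_coassoc : forall h, teq3 (ap2_2 D (D h))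
      (mul3 mH mH mH (mul3 mH mH mH Phi (ap2_1 D (D h))) Phii);
  qb_counit_l : forall h, \sum_(p <- D h) (eps p.1 *: p.2) = h;
  qb_counit_r : forall h, \sum_(p <- D h) (eps p.2 *: p.1) = h;
  (* (1 (x) Phi)(id (x) Delta (x) id)(Phi)(Phi (x) 1)
       = (id (x) id (x) Delta)(Phi)(Delta (x) id (x) id)(Phi) *)
  qb_pentagon : teq4
      (mul4 mH mH mH mH (mul4 mH mH mH mH (lift3_l eH Phi) (ap3_2 D Phi))
            (lift3_r eH Phi))
      (mul4 mH mH mH mH (ap3_3 D Phi) (ap3_1 D Phi));
  qb_Phi_eps : teq2 [seq (p.1.1, eps p.1.2 *: p.2) | p <- Phi] [:: (eH, eH)]
}.

Record gauge_transformation (H : lmodType k) (mH : H -> H -> H) (eH : H)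
  (eps : H -> k) (F Fi : seq (H * H)) : Prop := {
  gt_inv_r : teq2 (mul2 mH mH F Fi) [:: (eH, eH)];
  gt_inv_l : teq2 (mul2 mH mH Fi F) [:: (eH, eH)];
  gt_eps_l : \sum_(p <- F) (eps p.1 *: p.2) = eH;
  gt_eps_r : \sum_(p <- F) (eps p.2 *: p.1) = eH
}.

Record bimodule_algebra (H : lmodType k) (mH : H -> H -> H) (eH : H)
  (D : H -> seq (H * H)) (eps : H -> k) (Phi Phii : seq (H * H * H))
  (A : lmodType k) (mA : A -> A -> A) (eA : A)
  (actL : H -> A -> A) (actR : A -> H -> A) : Prop := {
  ba_unital : unital_bilinear mA eA;
  ba_actL_bil : bilinear_map actL;
  ba_actR_bil : bilinear_map actR;
  ba_actL_mul : forall h h' x, actL (mH h h') x = actL h (actL h' x);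
  ba_actL_one : forall x, actL eH x = x;
  ba_actR_mul : forall h h' x, actR x (mH h h') = actR (actR x h) h';
  ba_actR_one : forall x, actR x eH = x;
  ba_act_comm : forall h h' x, actR (actL h x) h' = actL h (actR x h');
  ba_mul_L : forall h x y,
      actL h (mA x y) = \sum_(p <- D h) mA (actL p.1 x) (actL p.2 y);
  ba_mul_R : forall h x y,
      actR (mA x y) h = \sum_(p <- D h) mA (actR x p.1) (actR y p.2);
  ba_one_L : forall h, actL h eA = eps h *: eA;
  ba_one_R : forall h, actR eA h = eps h *: eA;
  ba_qassoc : forall x y z, mA (mA x y) z =
      \sum_(X <- Phi) \sum_(Y <- Phii)
        mA (actL X.1.1 (actR x Y.1.1))
           (mA (actL X.1.2 (actR y Y.1.2)) (actL X.2 (actR z Y.2)))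
}.

Record bicomodule_algebra (H : lmodType k) (mH : H -> H -> H) (eH : H)
  (D : H -> seq (H * H)) (eps : H -> k) (Phi : seq (H * H * H))
  (B : lmodType k) (mB : B -> B -> B) (eB : B)
  (lam : B -> seq (H * B)) (rho : B -> seq (B * H))
  (Pl Pli : seq (H * H * B)) (Pr Pri : seq (B * H * H))
  (Plr Plri : seq (H * B * H)) : Prop := {
  bc_alg : is_algebra mB eB;
  bc_lam_lin : lin2 lam;
  bc_lam_mul : forall x y, teq2 (lam (mB x y)) (mul2 mH mB (lam x) (lam y));
  bc_lam_one : teq2 (lam eB) [:: (eH, eB)];
  bc_Pl_inv_r : teq3 (mul3 mH mH mB Pl Pli) [:: (eH, eH, eB)];
  bc_Pl_inv_l : teq3 (mul3 mH mH mB Pli Pl) [:: (eH, eH, eB)];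
  bc_lam_coassoc : forall u, teq3 (mul3 mH mH mB (ap2_2 lam (lam u)) Pl)
                                  (mul3 mH mH mB Pl (ap2_1 D (lam u)));
  bc_lam_pentagon : teq4
      (mul4 mH mH mH mB (mul4 mH mH mH mB (lift3_l eH Pl) (ap3_2 D Pl))
            (lift3_r eB Phi))
      (mul4 mH mH mH mB (ap3_3 lam Pl) (ap3_1 D Pl));
  bc_lam_counit : forall u, \sum_(p <- lam u) (eps p.1 *: p.2) = u;
  bc_Pl_eps : teq2 [seq (p.1.1, eps p.1.2 *: p.2) | p <- Pl] [:: (eH, eB)];
  bc_rho_lin : lin2 rho;
  bc_rho_mul : forall x y, teq2 (rho (mB x y)) (mul2 mB mH (rho x) (rho y));
  bc_rho_one : teq2 (rho eB) [:: (eB, eH)];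
  bc_Pr_inv_r : teq3 (mul3 mB mH mH Pr Pri) [:: (eB, eH, eH)];
  bc_Pr_inv_l : teq3 (mul3 mB mH mH Pri Pr) [:: (eB, eH, eH)];
  bc_rho_coassoc : forall u, teq3 (mul3 mB mH mH Pr (ap2_1 rho (rho u)))
                                  (mul3 mB mH mH (ap2_2 D (rho u)) Pr);
  bc_rho_pentagon : teq4
      (mul4 mB mH mH mH (mul4 mB mH mH mH (lift3_l eB Phi) (ap3_2 D Pr))
            (lift3_r eH Pr))
      (mul4 mB mH mH mH (ap3_3 D Pr) (ap3_1 rho Pr));
  bc_rho_counit : forall u, \sum_(p <- rho u) (eps p.2 *: p.1) = u;
  bc_Pr_eps : teq2 [seq (p.1.1, eps p.1.2 *: p.2) | p <- Pr] [:: (eB, eH)];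
  bc_Plr_inv_r : teq3 (mul3 mH mB mH Plr Plri) [:: (eH, eB, eH)];
  bc_Plr_inv_l : teq3 (mul3 mH mB mH Plri Plr) [:: (eH, eB, eH)];
  bc_lr : forall u, teq3 (ap2_2 rho (lam u))
      (mul3 mH mB mH (mul3 mH mB mH Plr (ap2_1 lam (rho u))) Plri);
  (* (1 (x) Plr)(id (x) lam (x) id)(Plr)(Pl (x) 1)
       = (id (x) id (x) rho)(Pl)(Delta (x) id (x) id)(Plr) *)
  bc_lr_pent1 : teq4
      (mul4 mH mH mB mH (mul4 mH mH mB mH (lift3_l eH Plr) (ap3_2 lam Plr))
            (lift3_r eH Pl))
      (mul4 mH mH mB mH (ap3_3 rho Pl) (ap3_1 D Plr));
  (* (1 (x) Pr)(id (x) rho (x) id)(Plr)(Plr (x) 1)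
       = (id (x) id (x) Delta)(Plr)(lam (x) id (x) id)(Pr) *)
  bc_lr_pent2 : teq4
      (mul4 mH mB mH mH (mul4 mH mB mH mH (lift3_l eH Pr) (ap3_2 rho Plr))
            (lift3_r eH Plr))
      (mul4 mH mB mH mH (ap3_3 D Plr) (ap3_1 lam Pr))
}.

Definition twist_mul (H A : lmodType k) (mA : A -> A -> A)
  (actL : H -> A -> A) (actR : A -> H -> A) (F Fi : seq (H * H)) (x y : A) : A :=
  \sum_(g <- Fi) \sum_(f <- F) mA (actL g.1 (actR x f.1)) (actL g.2 (actR y f.2)).

(* (phi # u)(psi # u') =
   (xl1.phi.th3 u'<1> xr2)(xl2 u[-1] th1.psi.xr3) # xl3 u[0] th2 u'<0> xr1
   with Pli = Phi_lambda^-1, Pri = Phi_rho^-1, Plri = Phi_{lambda,rho}^-1 *)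
Definition smash1 (H A B : lmodType k) (mH : H -> H -> H) (mB : B -> B -> B)
  (actL : H -> A -> A) (actR : A -> H -> A)
  (lam : B -> seq (H * B)) (rho : B -> seq (B * H)) (Plri : seq (H * B * H))
  (mA : A -> A -> A) (Pli : seq (H * H * B)) (Pri : seq (B * H * H))
  (phi : A) (u : B) (psi : A) (u' : B) : seq (A * B) :=
  bind Pli (fun xl => bind (lam u) (fun l => bind Plri (fun th =>
  bind (rho u') (fun r => [seq
    (mA (actL xl.1.1 (actR phi (mH (mH th.2 r.2) xr.1.2)))
        (actL (mH (mH xl.1.2 l.1) th.1.1) (actR psi xr.2)),
     mB (mB (mB (mB xl.2 l.2) th.1.2) r.1) xr.1.1) | xr <- Pri])))).

Definition smash (H A B : lmodType k) (mH : H -> H -> H) (mB : B -> B -> B)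
  (actL : H -> A -> A) (actR : A -> H -> A)
  (lam : B -> seq (H * B)) (rho : B -> seq (B * H)) (Plri : seq (H * B * H))
  (mA : A -> A -> A) (Pli : seq (H * H * B)) (Pri : seq (B * H * H))
  (s t : seq (A * B)) : seq (A * B) :=
  bind s (fun p => bind t (fun q =>
    smash1 mH mB actL actR lam rho Plri mA Pli Pri p.1 p.2 q.1 q.2)).

End QuasiHopf.

(* Main.v *)
From HB Require Import structures.
From mathcomp Require Import all_boot all_order all_algebra.
From mathcomp Require Import boolp classical_sets.
Require Import Defs.
Set Implicit Arguments. Unset Strict Implicit. Unset Printing Implicit Defensive.
Import GRing.Theory.
Local Open Scope ring_scope.
Local Open Scope classical_set_scope.

Section Core.
Variables (k : fieldType) (U : lmodType k).

Lemma islin0 (f : U -> k) : islin f -> f 0 = 0.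
Proof.
move=> hf; have e := hf 1 0 0; rewrite scale1r addr0 mul1r in e.
by apply: (@addrI _ (f 0)); rewrite addr0 -e.
Qed.

Lemma islinD (f : U -> k) : islin f -> forall x y, f (x + y) = f x + f y.
Proof. by move=> hf x y; have := hf 1 x y; rewrite scale1r mul1r. Qed.

Lemma islinZ (f : U -> k) : islin f -> forall a x, f (a *: x) = a * f x.
Proof. by move=> hf a x; have := hf a x 0; rewrite addr0 (islin0 hf) addr0. Qed.

Lemma functional_exists (r : U) : r != 0 -> exists g, islin g /\ g r = 1.
Proof.
move=> rn0.
pose good (G : set (U * k)) :=
  [/\ (forall x a b, G (x, a) -> G (x, b) -> a = b),
      (forall c x y a b, G (x, a) -> G (y, b) -> G (c *: x + y, c * a + b)) &
      G (r, 1)].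
pose P := fun G : set (U * k) => G = set0 \/ good G.
have goodF (F : set (set (U * k))) : F `<=` P -> forall X p, F X -> X p -> good X.
  move=> FP X p FX Xp; case: (FP X FX) => // X0.
  by rewrite X0 in Xp.
have [A [PA Amax]] : exists A, P A /\ forall B, A `<` B -> ~ P B.
  apply: Zorn_bigcup => F FP Ftot.
  case: (EM (\bigcup_(X in F) X = set0)) => [->|ne]; [by left|right].
  move/eqP: ne => /set0P [p [G0 FG0 G0p]].
  have gG0 := goodF F FP G0 p FG0 G0p.
  split.
  - move=> x a b [X FX Xa] [Y FY Yb].
    have gX := goodF F FP X _ FX Xa; have gY := goodF F FP Y _ FY Yb.
    case: (Ftot X Y FX FY) => sub.
      by case: gY => fY _ _; apply: fY (sub _ Xa) Yb.
    by case: gX => fX _ _; apply: fX Xa (sub _ Yb).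
  - move=> c x y a b [X FX Xa] [Y FY Yb].
    have gX := goodF F FP X _ FX Xa; have gY := goodF F FP Y _ FY Yb.
    case: (Ftot X Y FX FY) => sub.
      by exists Y => //; case: gY => _ cY _; apply: cY (sub _ Xa) Yb.
    by exists X => //; case: gX => _ cX _; apply: cX Xa (sub _ Yb).
  - by exists G0 => //; case: gG0.
have gA : good A.
  case: PA => // A0; exfalso.
  pose G0 := fun p : U * k => exists c, p = (c *: r, c).
  apply: (Amax G0); last first.
    right; split.
    - move=> x a b [c [-> ->]] [c' [e ->]].
      move/eqP: e; rewrite -subr_eq0 -scalerBl scaler_eq0 (negbTE rn0) orbF.
      by rewrite subr_eq0 => /eqP.
    - move=> c x y a b [c1 [-> ->]] [c2 [-> ->]].
      by exists (c * c1 + c2); rewrite scalerDl scalerA.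
    - by exists 1; rewrite scale1r.
  rewrite A0; split; first by [].
  by move=> /(_ (r, 1)) H; apply: H; exists 1; rewrite scale1r.
case: gA => fA cA rA.
have A00 : A (0, 0).
  by have := cA (-1) r r 1 1 rA rA; rewrite scaleN1r addNr mulN1r addNr.
have tot : forall x, exists a, A (x, a).
  move=> x; case: (EM (exists a, A (x, a))) => // nx; exfalso.
  pose B := fun p : U * k => exists d a c, A (d, a) /\ p = (d + c *: x, a).
  apply: (Amax B).
    split.
      by move=> [d a] Ada; exists d, a, 0; rewrite scale0r addr0.
    move=> /(_ (x, 0)) H; apply: nx; exists 0; apply: H.
    by exists 0, 0, 1; rewrite scale1r add0r.
  right; split.
  - move=> y a b [d [a1 [c [Ad [-> ->]]]]] [d' [a2 [c' [Ad' [e ->]]]]].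
    have [cc|cc] := eqVneq c c'.
      rewrite cc in e; move/addIr: e => e; rewrite e in Ad.
      exact: fA Ad Ad'.
    exfalso; apply: nx.
    have Ad2 := cA (-1) d d' a1 a2 Ad Ad'.
    have Ad3 := cA ((c - c')^-1) _ 0 _ 0 Ad2 A00.
    rewrite !addr0 in Ad3.
    suff -> : x = (c - c')^-1 *: (- 1 *: d + d') by eexists; exact: Ad3.
    have e2 : (c - c') *: x = d' - d.
      have -> : (c - c') *: x = (d + c *: x) - (d + c' *: x).
        by rewrite scalerBl opprD addrACA subrr add0r.
      by rewrite e opprD addrACA subrr addr0.
    rewrite scaleN1r (addrC (-d)) -e2 scalerA mulVf ?scale1r //.
    by rewrite subr_eq0.
  - move=> e y z a b [d [a1 [c1 [Ad [-> ->]]]]] [d' [a2 [c2 [Ad' [-> ->]]]]].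
    exists (e *: d + d'), (e * a1 + a2), (e * c1 + c2); split.
      exact: cA.
    congr (_, _); rewrite scalerDr scalerDl scalerA.
    by rewrite addrACA.
  - by exists r, 1, 0; rewrite scale0r addr0.
have [g Hg] := choice tot.
exists g; split; last exact: fA (Hg r) rA.
move=> a x y; apply: fA (Hg _) _.
exact: cA.
Qed.

Fixpoint all_lin (cb : seq ((U -> k) * U)) : Prop :=
  if cb is p :: cb' then islin p.1 /\ all_lin cb' else True.

Definition Qmap (cb : seq ((U -> k) * U)) (x : U) := \sum_(p <- cb) p.1 x *: p.2.

Lemma Qmap_lin cb : all_lin cb ->
  forall a x y, Qmap cb (a *: x + y) = a *: Qmap cb x + Qmap cb y.
Proof.
rewrite /Qmap; elim: cb => [|p cb IH] hcb a x y.
  by rewrite !big_nil scaler0 addr0.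
case: hcb => hp hcb.
rewrite !big_cons IH // hp scalerDl -scalerA scalerDr.
by rewrite addrACA.
Qed.

Lemma sepU (us : seq U) : exists cb : seq ((U -> k) * U),
  all_lin cb /\
  (forall u, u \in us -> u = Qmap cb u).
Proof.
elim: us => [|u us [cb [hcb hus]]]; first by exists [::].
have [r0|rn0] := eqVneq (u - Qmap cb u) 0.
  exists cb; split => // v; rewrite inE => /orP[/eqP ->|]; last exact: hus.
  by apply/eqP; rewrite -subr_eq0 r0.
have [g [lg gr]] := functional_exists rn0.
exists ((fun x => g (x - Qmap cb x), u - Qmap cb u) :: cb); split.
  split => //.
  move=> a x y /=; rewrite Qmap_lin // -lg; congr g.
  by rewrite scalerBr opprD addrACA.
move=> v; rewrite /Qmap big_cons -/(Qmap cb v) /=.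
rewrite inE => /orP[/eqP ->|vin].
  by rewrite gr scale1r subrK.
by rewrite -/(Qmap cb v) -(hus v vin) subrr islin0 // scale0r add0r.
Qed.
End Core.

Section Lin2.
Variables (k : fieldType) (U : lmodType k).

Lemma islin_sum (f : U -> k) I (r : seq I) (F : I -> U) : islin f ->
  f (\sum_(i <- r) F i) = \sum_(i <- r) f (F i).
Proof. by move=> hf; apply: big_morph; [exact: islinD | exact: islin0]. Qed.

Lemma islin_Qmap (f : U -> k) cb x : islin f ->
  f (Qmap cb x) = \sum_(q <- cb) q.1 x * f q.2.
Proof.
move=> hf; rewrite /Qmap islin_sum //; apply: eq_bigr => q _.
exact: islinZ.
Qed.

Lemma eq_big_all_lin (cb : seq ((U -> k) * U)) (F G : (U -> k) * U -> k) :
  all_lin cb -> (forall q, islin q.1 -> F q = G q) ->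
  \sum_(q <- cb) F q = \sum_(q <- cb) G q.
Proof.
elim: cb => [|q cb IH] /=; first by rewrite !big_nil.
by move=> [hq hcb] hFG; rewrite !big_cons hFG // IH.
Qed.
End Lin2.

Section T3.
Variables (k : fieldType) (U V W : lmodType k).

Definition tril (G : U -> V -> W -> k) :=
  [/\ forall y z, islin (fun x => G x y z), forall x z, islin (fun y => G x y z)
    & forall x y, islin (G x y)].

Definition E3 (s : seq (U * V * W)) (G : U -> V -> W -> k) :=
  \sum_(p <- s) G p.1.1 p.1.2 p.2.

Lemma expand3 (G : U -> V -> W -> k) cb1 cb2 s : tril G ->
  (forall p, p \in s -> p.1.1 = Qmap cb1 p.1.1 /\ p.1.2 = Qmap cb2 p.1.2) ->
  E3 s G = \sum_(q1 <- cb1) \sum_(q2 <- cb2) \sum_(p <- s)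
             q1.1 p.1.1 * q2.1 p.1.2 * G q1.2 q2.2 p.2.
Proof.
move=> [G1 G2 G3] hs; rewrite /E3.
rewrite (eq_big_seq (fun p => \sum_(q1 <- cb1) \sum_(q2 <- cb2)
             q1.1 p.1.1 * q2.1 p.1.2 * G q1.2 q2.2 p.2)).
  rewrite exchange_big; apply: eq_bigr => q1 _.
  by rewrite exchange_big.
move=> [[a b] c] /hs /= [ea eb].
rewrite [in LHS]ea (islin_Qmap _ _ (G1 b c)); apply: eq_bigr => q1 _.
rewrite [in LHS]eb (islin_Qmap _ _ (G2 q1.2 c)) mulr_sumr; apply: eq_bigr => q2 _.
by rewrite mulrA.
Qed.

Lemma T3 (s t : seq (U * V * W)) (G : U -> V -> W -> k) :
  teq3 s t -> tril G -> E3 s G = E3 t G.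
Proof.
move=> hst hG.
have [cb1 [l1 h1]] := sepU [seq p.1.1 | p <- s ++ t].
have [cb2 [l2 h2]] := sepU [seq p.1.2 | p <- s ++ t].
have hp (r : seq (U * V * W)) : {subset r <= s ++ t} -> forall p, p \in r ->
    p.1.1 = Qmap cb1 p.1.1 /\ p.1.2 = Qmap cb2 p.1.2.
  move=> sub p /sub pin; split.
    by apply: h1; apply: map_f.
  by apply: h2; apply: map_f.
rewrite (expand3 hG (hp s _)); last by move=> x xs; rewrite mem_cat xs.
rewrite (expand3 hG (hp t _)); last by move=> x xs; rewrite mem_cat xs orbT.
apply: eq_big_all_lin => // q1 lq1; apply: eq_big_all_lin => // q2 lq2.
by case: hG => _ _ G3; apply: hst.
Qed.
End T3.

Section Mul3.
Variables (k : fieldType) (U V W : lmodType k).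
Variables (mU : U -> U -> U) (mV : V -> V -> V) (mW : W -> W -> W).
Variables (eU : U) (eV : V) (eW : W).
Hypotheses (bU : bilinear_map mU) (bV : bilinear_map mV) (bW : bilinear_map mW).

Lemma E3_mul3 s t (G : U -> V -> W -> k) :
  E3 (mul3 mU mV mW s t) G =
  E3 s (fun a b c => E3 t (fun a' b' c' => G (mU a a') (mV b b') (mW c c'))).
Proof. by rewrite /E3 /mul3 big_allpairs_dep. Qed.

Lemma islin_comp (X Y : lmodType k) (f : Y -> k) (m : X -> Y) :
  islin f -> (forall a x y, m (a *: x + y) = a *: m x + m y) ->
  islin (fun x => f (m x)).
Proof. by move=> hf hm a x y; rewrite hm hf. Qed.

Lemma islin_sumf (X : lmodType k) I (r : seq I) (F : I -> X -> k) :
  (forall i, islin (F i)) -> islin (fun x => \sum_(i <- r) F i x).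
Proof.
move=> hF a x y; rewrite (eq_bigr _ (fun i _ => hF i a x y)).
by rewrite big_split /= mulr_sumr.
Qed.

Lemma tril_left (G : U -> V -> W -> k) t : tril G ->
  tril (fun a b c => E3 t (fun a' b' c' => G (mU a a') (mV b b') (mW c c'))).
Proof.
case: bU bV bW => [bU1 _] [bV1 _] [bW1 _] [G1 G2 G3]; split => *;
  apply: islin_sumf => q.
- exact: (islin_comp (G1 _ _) (fun a x y => bU1 a x y _)).
- exact: (islin_comp (G2 _ _) (fun a x y => bV1 a x y _)).
- exact: (islin_comp (G3 _ _) (fun a x y => bW1 a x y _)).
Qed.

Lemma tril_right (G : U -> V -> W -> k) a b c : tril G ->
  tril (fun a' b' c' => G (mU a a') (mV b b') (mW c c')).
Proof.
case: bU bV bW => [_ bU2] [_ bV2] [_ bW2] [G1 G2 G3]; split => *.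
- exact: (islin_comp (G1 _ _) (fun a x y => bU2 a x y _)).
- exact: (islin_comp (G2 _ _) (fun a x y => bV2 a x y _)).
- exact: (islin_comp (G3 _ _) (fun a x y => bW2 a x y _)).
Qed.

Hypotheses (aU : associative mU) (aV : associative mV) (aW : associative mW).

Lemma E3_assoc s t r (G : U -> V -> W -> k) :
  E3 (mul3 mU mV mW (mul3 mU mV mW s t) r) G =
  E3 (mul3 mU mV mW s (mul3 mU mV mW t r)) G.
Proof.
rewrite !E3_mul3; apply: eq_bigr => p _; rewrite E3_mul3.
apply: eq_bigr => q _.
by apply: eq_bigr => x _ /=; rewrite aU aV aW.
Qed.

Lemma teq3_assoc s t r one :
  teq3 (mul3 mU mV mW (mul3 mU mV mW s t) r) one ->
  teq3 (mul3 mU mV mW s (mul3 mU mV mW t r)) one.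
Proof.
move=> h f g l hf hg hl.
have e := E3_assoc s t r (fun a b c => f a * g b * l c).
rewrite /E3 /= in e; rewrite -e; exact: h.
Qed.

Lemma teq3_assoc_r s t r one :
  teq3 (mul3 mU mV mW s (mul3 mU mV mW t r)) one ->
  teq3 (mul3 mU mV mW (mul3 mU mV mW s t) r) one.
Proof.
move=> h f g l hf hg hl.
have e := E3_assoc s t r (fun a b c => f a * g b * l c).
rewrite /E3 /= in e; rewrite e; exact: h.
Qed.

Hypotheses (uUl : forall x, mU eU x = x) (uVl : forall x, mV eV x = x)
  (uWl : forall x, mW eW x = x).
Hypotheses (uUr : forall x, mU x eU = x) (uVr : forall x, mV x eV = x)
  (uWr : forall x, mW x eW = x).

Lemma inv_unique s t Z (G : U -> V -> W -> k) : tril G ->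
  teq3 (mul3 mU mV mW s t) [:: (eU, eV, eW)] ->
  teq3 (mul3 mU mV mW t Z) [:: (eU, eV, eW)] ->
  E3 s G = E3 Z G.
Proof.
move=> hG hst htZ.
have -> : E3 Z G = E3 [:: (eU, eV, eW)]
    (fun a b c => E3 Z (fun a' b' c' => G (mU a a') (mV b b') (mW c c'))).
  by rewrite /E3 big_seq1 /=; apply: eq_bigr => p _; rewrite uUl uVl uWl.
rewrite -(T3 hst (tril_left _ hG)) -E3_mul3 E3_assoc E3_mul3.
apply: eq_bigr => p _.
rewrite (T3 htZ (tril_right _ _ _ hG)) /E3 big_seq1 /=.
by rewrite uUr uVr uWr.
Qed.
End Mul3.

Section LinM.
Variable k : fieldType.
Definition linm (X Y : lmodType k) (m : X -> Y) :=
  forall a x y, m (a *: x + y) = a *: m x + m y.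

Lemma linm_id (X : lmodType k) : linm (fun x : X => x).
Proof. by []. Qed.

Lemma linm_l (X Y Z W : lmodType k) (m : X -> Y -> Z) (g : W -> X) z :
  bilinear_map m -> linm g -> linm (fun x => m (g x) z).
Proof. by move=> [m1 _] hg a x y; rewrite hg m1. Qed.

Lemma linm_r (X Y Z W : lmodType k) (m : X -> Y -> Z) (g : W -> Y) z :
  bilinear_map m -> linm g -> linm (fun x => m z (g x)).
Proof. by move=> [_ m2] hg a x y; rewrite hg m2. Qed.

Lemma linm_m (X Y Z : lmodType k) (m : X -> Y -> Z) z :
  bilinear_map m -> linm (m z).
Proof. by move=> [_ m2] a x y; rewrite m2. Qed.

Lemma islin_compm (X Y : lmodType k) (f : Y -> k) (m : X -> Y) :
  islin f -> linm m -> islin (fun x => f (m x)).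
Proof. by move=> hf hm a x y; rewrite hm hf. Qed.

Lemma islin_mulr (X : lmodType k) (h : X -> k) c :
  islin h -> islin (fun x => h x * c).
Proof. by move=> hh a x y; rewrite hh mulrDl mulrA. Qed.

Lemma islin_mull (X : lmodType k) (h : X -> k) c :
  islin h -> islin (fun x => c * h x).
Proof. by move=> hh a x y; rewrite hh mulrDr !mulrA (mulrC c). Qed.

Lemma big_bind (X Y : Type) (s : seq X) (Fb : X -> seq Y) (G : Y -> k) :
  \sum_(p <- bind s Fb) G p = \sum_(x <- s) \sum_(p <- Fb x) G p.
Proof. by rewrite /bind big_flatten big_map. Qed.
End LinM.

Section Main.
Variables (k : fieldType) (H A B : lmodType k).
Variables (mH : H -> H -> H) (eH : H) (mA : A -> A -> A).
Variables (actL : H -> A -> A) (actR : A -> H -> A).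
Variables (mB : B -> B -> B) (eB : B).
Variables (lam : B -> seq (H * B)) (rho : B -> seq (B * H)).
Variables (Pli PlFi : seq (H * H * B)) (Pri PrFi : seq (B * H * H)).
Variables (Plri : seq (H * B * H)) (F Fi : seq (H * H)).
Hypotheses (bH : bilinear_map mH) (bB : bilinear_map mB) (bA : bilinear_map mA).
Hypotheses (bL : bilinear_map actL) (bR : bilinear_map actR).
Hypotheses (aH : associative mH).
Hypotheses (uBl : forall x, mB eB x = x) (uBr : forall x, mB x eB = x).
Hypothesis aLmul : forall h h' x, actL (mH h h') x = actL h (actL h' x).
Hypothesis aRmul : forall h h' x, actR x (mH h h') = actR (actR x h) h'.
Hypothesis acomm : forall h h' x, actR (actL h x) h' = actL h (actR x h').
Hypothesis hL : forall G, tril G ->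
  E3 Pli G = E3 (mul3 mH mH mB (lift2_r eB Fi) PlFi) G.
Hypothesis hR : forall G, tril G ->
  E3 (mul3 mB mH mH PrFi (lift2_l eB F)) G = E3 Pri G.
Variables (f : A -> k) (g : B -> k).
Hypotheses (hf : islin f) (hg : islin g).
Variables (phi : A) (u : B) (psi : A) (u' : B).

Definition K0 (a1 a2 : H) (b : B) (l : H * B) (th : H * B * H) (r : B * H)
  (c : B) (h1 h2 : H) :=
  f (mA (actL a1 (actR phi (mH (mH th.2 r.2) h1)))
        (actL (mH (mH a2 l.1) th.1.1) (actR psi h2))) *
  g (mB (mB (mB (mB b l.2) th.1.2) r.1) c).

Ltac lin := repeat (first [ apply: islin_sumf => ?
  | apply: islin_mulr | apply: islin_mull
  | apply: (islin_compm hf) | apply: (islin_compm hg)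
  | apply: linm_id
  | apply: (linm_l _ bA) | apply: (linm_r _ bA)
  | apply: (linm_l _ bL) | apply: (linm_r _ bL)
  | apply: (linm_l _ bR) | apply: (linm_r _ bR)
  | apply: (linm_l _ bH) | apply: (linm_r _ bH)
  | apply: (linm_l _ bB) | apply: (linm_r _ bB)
  | apply: (linm_m _ bA) | apply: (linm_m _ bB) | apply: (linm_m _ bH)
  | apply: (linm_m _ bL) | apply: (linm_m _ bR) ]).

Lemma SS_unfold mA' Pli' Pri' :
  \sum_(p <- smash1 mH mB actL actR lam rho Plri mA' Pli' Pri' phi u psi u')
     f p.1 * g p.2 =
  \sum_(xl <- Pli') \sum_(l <- lam u) \sum_(th <- Plri) \sum_(r <- rho u')
  \sum_(xr <- Pri')
    f (mA' (actL xl.1.1 (actR phi (mH (mH th.2 r.2) xr.1.2)))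
        (actL (mH (mH xl.1.2 l.1) th.1.1) (actR psi xr.2))) *
    g (mB (mB (mB (mB xl.2 l.2) th.1.2) r.1) xr.1.1).
Proof.
rewrite /smash1 big_bind; apply: eq_bigr => xl _.
rewrite big_bind; apply: eq_bigr => l _.
rewrite big_bind; apply: eq_bigr => th _.
rewrite big_bind; apply: eq_bigr => r _.
by rewrite big_map.
Qed.

Lemma main1 :
  \sum_(p <- smash1 mH mB actL actR lam rho Plri mA Pli Pri phi u psi u')
     f p.1 * g p.2 =
  \sum_(p <- smash1 mH mB actL actR lam rho Plri
                 (twist_mul mA actL actR F Fi) PlFi PrFi phi u psi u')
     f p.1 * g p.2.
Proof.
rewrite !SS_unfold.
pose Gam a1 a2 b := \sum_(l <- lam u) \sum_(th <- Plri) \sum_(r <- rho u')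
   \sum_(xr <- PrFi) \sum_(f' <- F)
   K0 a1 a2 b l th r xr.1.1 (mH xr.1.2 f'.1) (mH xr.2 f'.2).
have step2 : forall xl, \sum_(l <- lam u) \sum_(th <- Plri) \sum_(r <- rho u')
  \sum_(xr <- Pri)
    f (mA (actL xl.1.1 (actR phi (mH (mH th.2 r.2) xr.1.2)))
        (actL (mH (mH xl.1.2 l.1) th.1.1) (actR psi xr.2))) *
    g (mB (mB (mB (mB xl.2 l.2) th.1.2) r.1) xr.1.1) = Gam xl.1.1 xl.1.2 xl.2.
  move=> xl; rewrite /Gam; apply: eq_bigr => l _; apply: eq_bigr => th _.
  apply: eq_bigr => r _.
  transitivity (E3 Pri (K0 xl.1.1 xl.1.2 xl.2 l th r)); first by [].
  rewrite -hR; last by split => *; rewrite /K0; lin.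
  rewrite /E3 /mul3 big_allpairs_dep; apply: eq_bigr => xr _.
  by rewrite /lift2_l big_map; apply: eq_bigr => f' _ /=; rewrite uBr.
rewrite (eq_bigr _ (fun xl _ => step2 xl)).
transitivity (E3 Pli Gam); first by [].
rewrite hL; last by split => *; rewrite /Gam /K0; lin.
rewrite /E3 /mul3 big_allpairs_dep /lift2_r big_map /=.
rewrite [LHS]exchange_big; apply: eq_bigr => xl _.
rewrite /Gam [LHS]exchange_big; apply: eq_bigr => l _.
rewrite [LHS]exchange_big; apply: eq_bigr => th _.
rewrite [LHS]exchange_big; apply: eq_bigr => r _.
rewrite [LHS]exchange_big; apply: eq_bigr => xr _.
rewrite /twist_mul islin_sum // mulr_suml; apply: eq_bigr => gg _.
rewrite islin_sum // mulr_suml; apply: eq_bigr => f' _.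
rewrite /K0 uBl !acomm -!aLmul -!aRmul !aH.
done.
Qed.
End Main.

Theorem proposition2p10 (k : fieldType)
  (H : lmodType k) (mH : H -> H -> H) (eH : H) (D : H -> seq (H * H))
  (eps : H -> k) (Phi Phii : seq (H * H * H))
  (A : lmodType k) (mA : A -> A -> A) (eA : A)
  (actL : H -> A -> A) (actR : A -> H -> A)
  (B : lmodType k) (mB : B -> B -> B) (eB : B)
  (lam : B -> seq (H * B)) (rho : B -> seq (B * H))
  (Pl Pli : seq (H * H * B)) (Pr Pri : seq (B * H * H))
  (Plr Plri : seq (H * B * H))
  (F Fi : seq (H * H))
  (PlFi : seq (H * H * B)) (PrFi : seq (B * H * H)) :
  quasi_bialgebra mH eH D eps Phi Phii ->
  bimodule_algebra mH eH D eps Phi Phii mA eA actL actR ->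
  bicomodule_algebra mH eH D eps Phi mB eB lam rho Pl Pli Pr Pri Plr Plri ->
  gauge_transformation mH eH eps F Fi ->
  (* PlFi is the inverse of the new reassociator Phi_lambda (F^-1 (x) 1) *)
  teq3 (mul3 mH mH mB (mul3 mH mH mB Pl (lift2_r eB Fi)) PlFi) [:: (eH, eH, eB)] ->
  teq3 (mul3 mH mH mB PlFi (mul3 mH mH mB Pl (lift2_r eB Fi))) [:: (eH, eH, eB)] ->
  (* PrFi is the inverse of the new reassociator (1 (x) F) Phi_rho *)
  teq3 (mul3 mB mH mH (mul3 mB mH mH (lift2_l eB F) Pr) PrFi) [:: (eB, eH, eH)] ->
  teq3 (mul3 mB mH mH PrFi (mul3 mB mH mH (lift2_l eB F) Pr)) [:: (eB, eH, eH)] ->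
  forall s t : seq (A * B),
    teq2 (smash mH mB actL actR lam rho Plri mA Pli Pri s t)
         (smash mH mB actL actR lam rho Plri (twist_mul mA actL actR F Fi)
                PlFi PrFi s t).
Proof.
move=> qb ba bc gt h1 h2 h3 h4 s t fA gB hf hg.
have [[bH uHl uHr] aH] := qb_alg qb.
have [[bB uBl uBr] aB] := bc_alg bc.
have [bA _ _] := ba_unital ba.
rewrite /smash !big_bind; apply: eq_bigr => p _.
rewrite !big_bind; apply: eq_bigr => q _.
apply: main1 => //.
- exact: ba_actL_bil ba.
- exact: ba_actR_bil ba.
- exact: ba_actL_mul ba.
- exact: ba_actR_mul ba.
- exact: ba_act_comm ba.
- move=> G hG.
  apply: (inv_unique bH bH bB aH aH aB uHl uHl uBl uHr uHr uBr hG).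
    exact: bc_Pl_inv_l bc.
  exact: teq3_assoc h1.
- move=> G hG.
  apply: (inv_unique bB bH bH aB aH aH uBl uHl uHl uBr uHr uHr hG).
    exact: teq3_assoc_r h4.
  exact: bc_Pr_inv_r bc.
Qed.
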